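(* Let $(\mathcal{S},\mathcal{A})$ be a finite directed acyclic graph with a unique initial state $s_0$, a unique sink state $s_f$, and a set of terminating states $\mathcal{X}\subset\mathcal{S}$ (the states having an edge to $s_f$). Let $k\ge 1$ and for each $i\in\{1,\dots,k\}$ let $p_{i,F}$ be a forward policy on this graph whose induced terminating state distribution is $p_i(x)=R_i(x)/Z_i$ for $x\in\mathcal{X}$, where $R_i:\mathcal{X}\to[0,\infty)$ and $Z_i=\sum_{x\in\mathcal{X}}R_i(x)>0$. Let $u_i$ denote the reaching probability under $p_{i,F}$. Let $\omega_1,\dots,\omega_k\ge 0$ and let $\mathcal{G}(a_1,\dots,a_k)=\sum_{i=1}^k\omega_i Z_i a_i$. Define the mixing policy $$p_{M,F}(s'\mid s)=\frac{\mathcal{G}\bigl(u_1(s)p_{1,F}(s'\mid s),\dots,u_k(s)p_{k,F}(s'\mid s)\bigr)}{N_M(s)},\qquad N_M(s)=\sum_{s':(s\to s')\in\mathcal{A}}\mathcal{G}\bigl(u_1(s)p_{1,F}(s'\mid s),\dots,u_k(s)p_{k,F}(s'\mid s)\bigr).$$ Then the terminating state distribution $p_M$ induced by $p_{M,F}$ exactly equals the target distribution $p_M^*$, i.e. $p_M(x)=p_M^*(x)\propto\sum_{i=1}^k\omega_iR_i(x)$ for $x\in\mathcal{X}$.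
   Context: A forward policy $p_F$ assigns to each state $s\neq s_f$ a probability distribution $p_F(\cdot\mid s)$ over the children $s'$ of $s$ (states with $(s\to s')\in\mathcal{A}$). It induces a distribution over complete trajectories $s_0\to s_1\to\cdots\to s_n=x\to s_f$ by multiplying transition probabilities. The reaching probability is $u(s)=\sum_{\tau\in\mathcal{T}_{s_0,s}}\prod_{t=1}^T p_F(s_t\mid s_{t-1})$, where $\mathcal{T}_{s_0,s}$ is the set of paths $s_0\to\cdots\to s_T=s$; equivalently $u(s_0)=1$ and $u(s)=\sum_{s_*:(s_*\to s)\in\mathcal{A}}u(s_* )p_F(s\mid s_* )$. The induced terminating state distribution is $p(x)=u(x)\,p_F(s_f\mid x)$ for $x\in\mathcal{X}$. *)

(* Defs.v *)
From HB Require Import structures.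
From mathcomp Require Import all_boot all_order all_algebra.
Set Implicit Arguments. Unset Strict Implicit. Unset Printing Implicit Defensive.
Import Order.TTheory GRing.Theory Num.Theory.
Local Open Scope ring_scope.

Section GFlowNet.
Variables (S : finType) (A : rel S).

Definition acyclic : Prop :=
  forall (s : S) (t : seq S), path A s t -> last s t = s -> t = [::].

Definition unique_initial (s0 : S) : Prop :=
  forall s : S, (forall s' : S, ~~ A s' s) <-> s = s0.

Definition unique_sink (sf : S) : Prop :=
  forall s : S, (forall s' : S, ~~ A s s') <-> s = sf.

Definition terminating (sf : S) : pred S := fun x => A x sf.

Variable R : realFieldType.

Definition forward_policy (sf : S) (pF : S -> S -> R) : Prop :=
  forall s : S, s != sf ->
    [/\ forall s', 0 <= pF s s',
        forall s', ~~ A s s' -> pF s s' = 0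
      & \sum_(s' | A s s') pF s s' = 1].

(* In a DAG on S every path has
   T < #|S| edges, so summing over lengths T < #|S| covers all paths. *)
Definition reach (s0 : S) (pF : S -> S -> R) (s : S) : R :=
  \sum_(n < #|S|) \sum_(t : n.-tuple S | path A s0 t && (last s0 t == s))
     \prod_(i < n) pF (nth s0 (s0 :: t) i) (tnth t i).

Definition term_dist (s0 sf : S) (pF : S -> S -> R) (x : S) : R :=
  reach s0 pF x * pF x sf.

Definition partZ (sf : S) (Rw : S -> R) : R :=
  \sum_(x | terminating sf x) Rw x.

Variable k : nat.

Definition mixG (sf : S) (omega : 'I_k -> R) (Rw : 'I_k -> S -> R)
    (a : 'I_k -> R) : R :=
  \sum_(i < k) omega i * partZ sf (Rw i) * a i.

Definition mixN (s0 sf : S) (omega : 'I_k -> R) (Rw : 'I_k -> S -> R)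
    (pF : 'I_k -> S -> S -> R) (s : S) : R :=
  \sum_(s' | A s s')
     mixG sf omega Rw (fun i => reach s0 (pF i) s * pF i s s').

Definition mix_policy (s0 sf : S) (omega : 'I_k -> R) (Rw : 'I_k -> S -> R)
    (pF : 'I_k -> S -> S -> R) (s s' : S) : R :=
  mixG sf omega Rw (fun i => reach s0 (pF i) s * pF i s s')
  / mixN s0 sf omega Rw pF s.

End GFlowNet.

(* Main.v *)
Require Import Defs.
From HB Require Import structures.
From mathcomp Require Import all_boot all_order all_algebra.
From mathcomp Require Import ring zify.
Import Order.TTheory GRing.Theory Num.Theory.
Local Open Scope ring_scope.
Set Implicit Arguments. Unset Strict Implicit. Unset Printing Implicit Defensive.

Section Aux.
Variables (S : finType) (A : rel S).

Lemma acyc_uniq (HA : acyclic A) (t : seq S) a : path A a t -> uniq (a :: t).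
Proof.
elim: t a => [//|b t IH] a p.
rewrite cons_uniq (IH b); last by case/andP: p.
rewrite andbT; apply/negP => Hin; move: p.
case/path.splitP: Hin => p1 p2.
rewrite cat_path => /andP[Hp _].
have := HA a (rcons p1 a) Hp; rewrite last_rcons => /(_ erefl).
by case: p1 {Hp}.
Qed.

Lemma acyc_size (HA : acyclic A) a (t : seq S) : path A a t -> (size t < #|S|)%N.
Proof.
move=> p; have U := acyc_uniq HA p.
have : (size (a :: t) <= #|S|)%N by rewrite -(card_uniqP U) max_card.
by [].
Qed.

Lemma back_path (HA : acyclic A) (P : S -> Prop) :
  (forall s, P s -> exists t, A t s /\ P t) -> forall s, ~ P s.
Proof.
move=> H s Ps.
have : forall n, exists a (t : seq S), [/\ P a, size t = n, path A a t & last a t = s].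
  elim=> [|n [a [t [Pa St Pt Lt]]]]; first by exists s, [::].
  have [b [Aba Pb]] := H a Pa.
  by exists b, (a :: t); split => //=; [rewrite St | rewrite Aba Pt].
move=> /(_ #|S|) [a [t [_ St Pt _]]].
by have := acyc_size HA Pt; rewrite St ltnn.
Qed.

Variable (R : realFieldType).
Implicit Types (q : S -> S -> R).

Definition G q a n s : R :=
  \sum_(t : n.-tuple S | path A a t && (last a t == s))
     \prod_(i < n) q (nth a (a :: t) i) (tnth t i).

Fixpoint pprod q a (t : seq S) : R :=
  if t is x :: t' then q a x * pprod q x t' else 1.

Lemma prod_pprod q a (t : seq S) :
  \prod_(0 <= i < size t) q (nth a (a :: t) i) (nth a t i) = pprod q a t.
Proof.
elim: t a => [|x t IH] a /=; first by rewrite big_geq.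
rewrite big_nat_recl // -IH; congr (_ * _).
rewrite big_nat_cond [RHS]big_nat_cond; apply: eq_bigr => i /andP[/andP[_ Hi] _] /=.
rewrite (@set_nth_default _ t x a) // (@set_nth_default _ (x :: t) x a) //=; lia.
Qed.

Lemma G_pprod q a n s :
  G q a n s = \sum_(t : n.-tuple S | path A a t && (last a t == s)) pprod q a t.
Proof.
apply: eq_bigr => t _; rewrite -prod_pprod size_tuple big_mkord.
by apply: eq_bigr => i _; rewrite (tnth_nth a).
Qed.

Lemma sum_tuple_cons n (F : n.+1.-tuple S -> R) :
  \sum_(t : n.+1.-tuple S) F t = \sum_(x : S) \sum_(t : n.-tuple S) F [tuple of x :: t].
Proof.
rewrite (pair_big xpredT xpredT (fun (x : S) (t : n.-tuple S) => F [tuple of x :: t])) /=.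
rewrite (reindex (fun p : S * n.-tuple S => [tuple of p.1 :: p.2])) //=.
exists (fun t : n.+1.-tuple S => (thead t, [tuple of behead t])) => [[x t] _ | t _].
  by congr (_, _); apply: val_inj.
by apply: val_inj => /=; rewrite [in RHS](tuple_eta t).
Qed.

Lemma G_cons q a n s :
  G q a n.+1 s = \sum_(x | A a x) q a x * G q x n s.
Proof.
rewrite G_pprod big_mkcond sum_tuple_cons [RHS]big_mkcond.
apply: eq_bigr => x _ /=.
case: (A a x) => /=; last by rewrite big1.
rewrite G_pprod mulr_sumr [RHS]big_mkcond; apply: eq_bigr => t _ /=.
by case: ifP.
Qed.

Lemma G0 q a s : G q a 0 s = (s == a)%:R.
Proof.
rewrite /G big_mkcond (big_pred1 [tuple]) /=; last by move=> t; apply/esym/eqP; exact: tuple0.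
by rewrite big_ord0 eq_sym; case: eqP.
Qed.

Lemma G_fwd q n a s :
  G q a n.+1 s = \sum_(t | A t s) G q a n t * q t s.
Proof.
elim: n a s => [|n IH] a s.
  rewrite G_cons.
  under eq_bigr do rewrite G0.
  under [RHS]eq_bigr do rewrite G0.
  rewrite big_mkcond (bigD1 s) //= big1 => [|t /negbTE nts]; last first.
    by rewrite eq_sym nts; case: ifP; rewrite ?mulr0.
  rewrite [RHS]big_mkcond (bigD1 a) //= big1 => [|t /negbTE nta]; last first.
    by rewrite nta; case: ifP; rewrite ?mul0r.
  by rewrite !eqxx !addr0 mulr1 mul1r.
rewrite G_cons.
under eq_bigr => x _ do rewrite IH mulr_sumr.
rewrite exchange_big /=; apply: eq_bigr => t _.
by rewrite G_cons mulr_suml; apply: eq_bigr => x _; rewrite mulrA.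
Qed.

Lemma G_ge0 q n a s : (forall a b, A a b -> 0 <= q a b) -> 0 <= G q a n s.
Proof.
move=> Hq; elim: n a s => [|n IH] a s; first by rewrite G0 ler0n.
by rewrite G_cons; apply: sumr_ge0 => x Hx; rewrite mulr_ge0 ?Hq.
Qed.

Lemma G_big (HA : acyclic A) q n a s : (#|S| <= n)%N -> G q a n s = 0.
Proof.
move=> Hn; apply: big1 => t /andP[p _]; exfalso.
by have := acyc_size HA p; rewrite size_tuple; lia.
Qed.

Lemma reachG q s0 s : reach A s0 q s = \sum_(n < #|S|) G q s0 n s.
Proof. by []. Qed.

Lemma reach_rec (HA : acyclic A) q s0 s :
  reach A s0 q s = (s == s0)%:R + \sum_(t | A t s) reach A s0 q t * q t s.
Proof.
rewrite reachG.
transitivity (\sum_(n < #|S|.+1) G q s0 n s).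
  by rewrite big_ord_recr /= (G_big HA) ?addr0.
rewrite big_ord_recl G0; congr (_ + _).
under eq_bigr => i _ do rewrite lift0 G_fwd.
rewrite exchange_big /=; apply: eq_bigr => t _.
by rewrite reachG mulr_suml.
Qed.

Lemma reach_ge0 q s0 s : (forall a b, A a b -> 0 <= q a b) -> 0 <= reach A s0 q s.
Proof. by move=> Hq; rewrite reachG; apply: sumr_ge0 => n _; apply: G_ge0. Qed.

End Aux.

Theorem proposition4p1 (R : realFieldType) (S : finType) (A : rel S)
  (s0 sf : S) (k : nat) (pF : 'I_k -> S -> S -> R) (Rw : 'I_k -> S -> R)
  (omega : 'I_k -> R) :
  acyclic A -> unique_initial A s0 -> unique_sink A sf ->
  (0 < k)%N ->
  (forall i, forward_policy A sf (pF i)) ->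
  (forall i x, terminating A sf x -> 0 <= Rw i x) ->
  (forall i, 0 < partZ A sf (Rw i)) ->
  (forall i x, terminating A sf x ->
     term_dist A s0 sf (pF i) x = Rw i x / partZ A sf (Rw i)) ->
  (forall i, 0 <= omega i) ->
  forall x, terminating A sf x ->
    term_dist A s0 sf (mix_policy A s0 sf omega Rw pF) x
    = (\sum_(i < k) omega i * Rw i x)
      / (\sum_(y | terminating A sf y) \sum_(i < k) omega i * Rw i y).
Proof.
move=> HA Hinit Hsink k0 HpF HRw HZ Hterm Hom x Hx.
pose g s := \sum_(i < k) omega i * partZ A sf (Rw i) * reach A s0 (pF i) s.
pose pM := mix_policy A s0 sf omega Rw pF.
have notsf : forall a b, A a b -> a != sf.
  move=> a b Hab; apply/eqP => E; subst a.
  by move: (proj2 (Hsink sf) erefl b); rewrite Hab.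
have u_ge0 : forall i s, 0 <= reach A s0 (pF i) s.
  move=> i s; apply: reach_ge0 => a b Hab.
  by case: (HpF i a (notsf _ _ Hab)).
have us0 : forall i, reach A s0 (pF i) s0 = 1.
  move=> i; rewrite (reach_rec HA) eqxx big_pred0 ?addr0 // => s.
  by apply/negbTE; exact: (proj2 (Hinit s0) erefl s).
have HN : forall s, s != sf -> mixN A s0 sf omega Rw pF s = g s.
  move=> s Hs; rewrite /mixN /mixG exchange_big /=; apply: eq_bigr => i _.
  rewrite -!mulr_sumr.
  by case: (HpF i s Hs) => _ _ ->; rewrite mulr1.
have HG : forall s s', s != sf ->
    mixG A sf omega Rw (fun i => reach A s0 (pF i) s * pF i s s') = g s * pM s s'.
  move=> s s' Hs; rewrite /pM /mix_policy HN //.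
  have [g0|gn0] := eqVneq (g s) 0; last by rewrite mulrC divfK.
  rewrite g0 mul0r.
  have Hge : forall t, 0 <= mixG A sf omega Rw (fun i => reach A s0 (pF i) s * pF i s t).
    move=> t; apply: sumr_ge0 => i _.
    apply: mulr_ge0; first by apply: mulr_ge0 => //; exact: ltW.
    by apply: mulr_ge0 => //; case: (HpF i s Hs).
  have Hsum : \sum_(t | A s t) mixG A sf omega Rw (fun i => reach A s0 (pF i) s * pF i s t) = 0.
    by rewrite -/(mixN A s0 sf omega Rw pF s) HN.
  case: (boolP (A s s')) => Hss'.
    exact: (psumr_eq0P (fun t _ => Hge t) Hsum).
  rewrite /mixG big1 // => i _.
  by case: (HpF i s Hs) => _ -> //; rewrite !mulr0.
have Hg : forall s, g s = (s == s0)%:R * g s0 + \sum_(t | A t s) g t * pM t s.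
  move=> s; under [in RHS]eq_bigr => t Hts do rewrite -(HG t s (notsf _ _ Hts)).
  rewrite /g /mixG exchange_big mulr_sumr -big_split /=; apply: eq_bigr => i _.
  rewrite us0 mulr1 [in LHS](reach_rec HA) mulrDr -!mulr_sumr.
  congr (_ + _); first by rewrite mulrC.
have Hd : forall s, reach A s0 pM s * g s0 - g s
    = \sum_(t | A t s) (reach A s0 pM t * g s0 - g t) * pM t s.
  move=> s; rewrite {1}(reach_rec HA) {1}(Hg s) mulrDl mulr_suml opprD addrACA subrr add0r -sumrB.
  by apply: eq_bigr => t _; ring.
have d0 : forall s, reach A s0 pM s * g s0 = g s.
  move=> s; apply/eqP; rewrite -subr_eq0; apply/negPn/negP => Hne.
  suff H : forall s, reach A s0 pM s * g s0 - g s != 0 ->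
      exists t, A t s /\ reach A s0 pM t * g s0 - g t != 0.
    exact: (back_path HA H Hne).
  move=> {}s {}Hne.
  have [t /andP[Ats Hdt]|Hn] := pickP (fun t => A t s && (reach A s0 pM t * g s0 - g t != 0)).
    by exists t.
  move: Hne; rewrite Hd big1 ?eqxx // => t Ats.
  by move: (Hn t); rewrite /= Ats /= => /negbFE/eqP ->; rewrite mul0r.
have xnsf := notsf x sf Hx.
have Hden : \sum_(y | terminating A sf y) \sum_(i < k) omega i * Rw i y = g s0.
  rewrite exchange_big /g; apply: eq_bigr => i _.
  by rewrite us0 mulr1 /partZ mulr_sumr.
have Hnum : mixG A sf omega Rw (fun i => reach A s0 (pF i) x * pF i x sf)
    = \sum_(i < k) omega i * Rw i x.
  apply: eq_bigr => i _; have := Hterm i x Hx; rewrite /term_dist => ->.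
  by rewrite -mulrA [partZ _ _ _ * _]mulrC divfK // gt_eqF ?HZ.
rewrite Hden /term_dist -/pM.
have [c0|cn0] := eqVneq (g s0) 0.
  have gx0 : g x = 0 by rewrite -d0 c0 mulr0.
  have n0 : \sum_(i < k) omega i * Rw i x = 0 by rewrite -Hnum HG // gx0 mul0r.
  by rewrite n0 mul0r /pM /mix_policy Hnum n0 mul0r mulr0.
have E : reach A s0 pM x = g x / g s0 by rewrite -d0 mulfK.
by rewrite E mulrAC -HG // Hnum.
Qed.
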